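(* Let $\mathsf{K}$ be a non-trivial filter class of structures contained in $\mathsf{DL}_\infty$. Then either $\mathsf{DL}_\omega\subseteq\mathsf{K}$, or $\mathsf{K}=\mathsf{DL}_n$ for some $n\in\{0,1,2,\dots\}$. Consequently, the only non-trivial proper finitary filter classes contained in $\mathsf{DL}_\infty$ are the classes $\mathsf{DL}_n$, $n\in\{0,1,2,\dots\}$.
   Context: A structure is a pair $\langle\mathbf{A},F\rangle$ with $\mathbf{A}$ an algebra and $F\subseteq\mathbf{A}$; here $\mathbf{A}$ ranges over distributive lattices (signature $\wedge,\vee$). A homomorphism $h\colon\langle\mathbf{A},F\rangle\to\langle\mathbf{B},G\rangle$ is strict if $F=h^{-1}[G]$. Substructures are $\langle\mathbf{B},F\cap\mathbf{B}\rangle$ for subalgebras $\mathbf{B}$; the product of $\langle\mathbf{A}_i,F_i\rangle$ is $\langle\prod\mathbf{A}_i,\prod F_i\rangle$. A filter class is a class of such structures closed under isomorphism, substructures, products and strict homomorphic preimages (i.e. $\langle\mathbf{A},F\rangle$ such that some surjective strict homomorphism maps it onto a member); it is finitary if also closed under ultraproducts, and trivial if all its members $\langle\mathbf{A},F\rangle$ have $F=\mathbf{A}$. For a set $X$, $Y\subseteq_n X$ means $Y$ non-empty, $Y\subseteq X$, $|Y|\le n$. An $n$-filter ($n\ge1$) on a lattice is an upset $F$ such that for every non-empty finite $X\subseteq F$, if $\bigwedge Y\in F$ for all $Y\subseteq_nX$ then $\bigwedge X\in F$; a $0$-filter is either $\emptyset$ or the whole lattice. $\mathsf{DL}_\infty$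 is the class of all $\langle\mathbf{L},F\rangle$ with $\mathbf{L}$ a distributive lattice and $F$ an upset; $\mathsf{DL}_n$ is its subclass where $F$ is an $n$-filter. An upset of a distributive lattice $\mathbf{L}$ is residually finite if it is an intersection of sets $h^{-1}[G]$ with $h\colon\mathbf{L}\to\mathbf{M}$ a lattice homomorphism into a finite distributive lattice and $G$ an upset of $\mathbf{M}$; $\mathsf{DL}_\omega$ is the subclass of $\mathsf{DL}_\infty$ where $F$ is residually finite. *)

(* Defs.v *)
From HB Require Import structures.
From mathcomp Require Import all_boot all_order.
Set Implicit Arguments. Unset Strict Implicit. Unset Printing Implicit Defensive.
Local Open Scope order_scope.

Definition fclass :=
  forall (d : Order.disp_t) (L : distrLatticeType d), (L -> Prop) -> Prop.

Definition lhom d1 d2 (A : distrLatticeType d1) (B : distrLatticeType d2)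
  (h : A -> B) : Prop :=
  forall x y : A, h (x `&` y) = h x `&` h y /\ h (x `|` y) = h x `|` h y.

Definition iso_closed (K : fclass) : Prop :=
  forall d1 (A : distrLatticeType d1) (F : A -> Prop)
         d2 (B : distrLatticeType d2) (h : A -> B),
    lhom h -> bijective h -> K _ A F ->
    K _ B (fun b => exists a, h a = b /\ F a).

(* closure under substructures (up to isomorphism: B embeds into A) *)
Definition sub_closed (K : fclass) : Prop :=
  forall d1 (A : distrLatticeType d1) (F : A -> Prop)
         d2 (B : distrLatticeType d2) (e : B -> A),
    lhom e -> injective e -> K _ A F -> K _ B (fun b => F (e b)).

(* closure under products: B with projections p_i forming a product of the A_i
   (jointly injective and jointly surjective), with the product filter *)
Definition prod_closed (K : fclass) : Prop :=
  forall (I : Type) (d : I -> Order.disp_t) (A : forall i, distrLatticeType (d i))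
         (F : forall i, A i -> Prop),
    (forall i, K _ (A i) (F i)) ->
    forall dB (B : distrLatticeType dB) (p : forall i, B -> A i),
      (forall i, lhom (p i)) ->
      (forall b b' : B, (forall i, p i b = p i b') -> b = b') ->
      (forall a : forall i, A i, exists b : B, forall i, p i b = a i) ->
      K _ B (fun b => forall i, F i (p i b)).

Definition preimage_closed (K : fclass) : Prop :=
  forall d1 (A : distrLatticeType d1) d2 (B : distrLatticeType d2)
         (G : B -> Prop) (h : A -> B),
    lhom h -> (forall b, exists a, h a = b) -> K _ B G ->
    K _ A (fun a => G (h a)).

Definition filter_class (K : fclass) : Prop :=
  [/\ iso_closed K, sub_closed K, prod_closed K & preimage_closed K].

Definition ultrafilter (I : Type) (U : (I -> Prop) -> Prop) : Prop :=
  [/\ U (fun _ => True), ~ U (fun _ => False),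
      (forall X Y : I -> Prop, U X -> (forall i, X i -> Y i) -> U Y),
      (forall X Y : I -> Prop, U X -> U Y -> U (fun i => X i /\ Y i)) &
      (forall X : I -> Prop, U X \/ U (fun i => ~ X i))].

(* closure under ultraproducts: B is (up to isomorphism) the ultraproduct
   prod_i A_i / U, given by a surjective homomorphism h from the product
   whose kernel is the U-congruence; the filter is the ultraproduct filter *)
Definition ultraprod_closed (K : fclass) : Prop :=
  forall (I : Type) (U : (I -> Prop) -> Prop) (d : I -> Order.disp_t)
         (A : forall i, distrLatticeType (d i)) (F : forall i, A i -> Prop),
    ultrafilter U ->
    (forall i, K _ (A i) (F i)) ->
    forall dB (B : distrLatticeType dB) (h : (forall i, A i) -> B),
      (forall a a' : forall i, A i,
          h (fun i => a i `&` a' i) = h a `&` h a' /\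
          h (fun i => a i `|` a' i) = h a `|` h a') ->
      (forall b, exists a, h a = b) ->
      (forall a a', h a = h a' <-> U (fun i => a i = a' i)) ->
      K _ B (fun b => exists a, h a = b /\ U (fun i => F i (a i))).

Definition finitary (K : fclass) : Prop := filter_class K /\ ultraprod_closed K.

Definition trivial_class (K : fclass) : Prop :=
  forall d (L : distrLatticeType d) (F : L -> Prop), K _ L F -> forall x, F x.

Definition subclass (K1 K2 : fclass) : Prop :=
  forall d (L : distrLatticeType d) (F : L -> Prop), K1 _ L F -> K2 _ L F.

Definition same_class (K1 K2 : fclass) : Prop :=
  forall d (L : distrLatticeType d) (F : L -> Prop), K1 _ L F <-> K2 _ L F.

Definition upset d (L : distrLatticeType d) (F : L -> Prop) : Prop :=
  forall x y : L, F x -> x <= y -> F y.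

Definition bigmeet d (L : distrLatticeType d) (x : L) (s : seq L) : L :=
  foldr Order.meet x s.

(* A non-empty finite X is represented by a list x :: s,
   a non-empty Y with |Y| <= n and Y subset of X by a list y :: t with all
   entries in x :: s and (size t).+1 <= n (repetitions do not affect meets). *)
Definition n_filter (n : nat) d (L : distrLatticeType d) (F : L -> Prop) : Prop :=
  match n with
  | 0 => (forall x, ~ F x) \/ (forall x, F x)
  | _ => upset F /\
      forall (x : L) (s : seq L),
        (forall z, z \in x :: s -> F z) ->
        (forall (y : L) (t : seq L),
            y \in x :: s -> (forall z, z \in t -> z \in x :: s) ->
            (size t).+1 <= n -> F (bigmeet y t)) ->
        F (bigmeet x s)
  end.

Definition residually_finite d (L : distrLatticeType d) (F : L -> Prop) : Prop :=
  exists (J : Type) (e : J -> Order.disp_t) (M : forall j, finDistrLatticeType (e j))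
         (h : forall j, L -> M j) (G : forall j, M j -> Prop),
    (forall j, lhom (h j) /\ upset (G j)) /\
    (forall x, F x <-> forall j, G j (h j x)).

Definition DL_inf : fclass := fun d L F => @upset d L F.
Definition DL_n (n : nat) : fclass := fun d L F => @n_filter n d L F.
Definition DL_omega : fclass := fun d L F => @upset d L F /\ @residually_finite d L F.

(* Main.v *)
Require Import Defs.
From HB Require Import structures.
From mathcomp Require Import all_boot all_order.
From mathcomp Require Import boolp zify.
From mathcomp Require filter classical_sets.
From Stdlib Require Import Lia Classical.
Set Implicit Arguments. Unset Strict Implicit. Unset Printing Implicit Defensive.
Import Order.LTheory.

Local Open Scope order_scope.


Section Lists.
Context {d : Order.disp_t} {L : distrLatticeType d}.
Implicit Types (x y w : L) (s t : seq L).

Definition lmeet (Y : seq L) (dflt : L) : L := bigmeet (head dflt Y) (behead Y).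

Lemma le_bigmeet w y t : (w <= bigmeet y t) = all (fun u => w <= u) (y :: t).
Proof. by elim: t => [|u t IH] /=; rewrite ?andbT // lexI IH /= andbCA. Qed.

Lemma le_lmeet w Y dflt : Y != [::] ->
  (w <= lmeet Y dflt) = all (fun u => w <= u) Y.
Proof. by case: Y => // y t _; rewrite /lmeet le_bigmeet. Qed.

Lemma lmeet_le Y dflt u : u \in Y -> lmeet Y dflt <= u.
Proof.
move=> uY; have Y0 : Y != [::] by case: Y uY.
by have := le_lmeet (lmeet Y dflt) dflt Y0; rewrite lexx => /esym/allP; apply.
Qed.

Lemma le_lmeetP w Y dflt : Y != [::] ->
  (forall u, u \in Y -> w <= u) -> w <= lmeet Y dflt.
Proof. by move=> Y0 H; rewrite le_lmeet //; apply/allP. Qed.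

Definition mt (b : L) (z : nat -> L) (S : seq nat) : L :=
  foldr (fun k acc => z k `&` acc) b S.
Definition jn (b : L) (z : nat -> L) (S : seq nat) : L :=
  foldr (fun k acc => z k `|` acc) b S.

Lemma le_mt w b z S : (w <= mt b z S) = (w <= b) && all (fun k => w <= z k) S.
Proof. by elim: S => [|k S IH] /=; rewrite ?andbT // lexI IH andbCA. Qed.

Lemma jn_le w b z S : (jn b z S <= w) = (b <= w) && all (fun k => z k <= w) S.
Proof. by elim: S => [|k S IH] /=; rewrite ?andbT // leUx IH andbCA. Qed.

Definition om (z : nat -> L) n i : L :=
  mt (z (if i == 0 then 1 else 0)) z [seq k <- iota 0 n.+1 | k != i].
Definition fm (z : nat -> L) n : L := mt (z 0) z (iota 0 n.+1).

Lemma le_om w z n i : (0 < n)%N ->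
  (w <= om z n i) <-> (forall k, (k <= n)%N -> k != i -> w <= z k).
Proof.
move=> n0; rewrite /om le_mt; split.
  case/andP=> _ /allP H k kn ki; apply: H.
  by rewrite mem_filter ki mem_iota.
move=> H; apply/andP; split.
  case: (i =P 0) => [i0|/eqP ni]; apply: H => //; first by rewrite i0.
  by rewrite eq_sym.
by apply/allP => k; rewrite mem_filter mem_iota => /andP[ki /andP[_ kn]]; apply: H.
Qed.

Lemma le_fm w z n : (w <= fm z n) <-> (forall k, (k <= n)%N -> w <= z k).
Proof.
rewrite /fm le_mt; split.
  by case/andP=> _ /allP H k kn; apply: H; rewrite mem_iota.
move=> H; apply/andP; split; first exact: H.
by apply/allP=> k; rewrite mem_iota => /andP[_ kn]; apply: H.
Qed.

Lemma fm_le z n k : (k <= n)%N -> fm z n <= z k.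
Proof. by move=> kn; move: (lexx (fm z n)); rewrite le_fm => /(_ k kn). Qed.

Lemma om_le z n i k : (0 < n)%N -> (k <= n)%N -> k != i -> om z n i <= z k.
Proof. by move=> n0 kn ki; move: (lexx (om z n i)); rewrite le_om // => /(_ k kn ki). Qed.

Lemma fm_le_om z n i : (0 < n)%N -> fm z n <= om z n i.
Proof. by move=> n0; apply/le_om => // k kn _; apply: fm_le. Qed.

End Lists.

Definition Rule n d (L : distrLatticeType d) (F : L -> Prop) : Prop :=
  forall z : nat -> L, (forall i, (i <= n)%N -> F (om z n i)) -> F (fm z n).

Section NFilter.
Context {d : Order.disp_t} {L : distrLatticeType d}.

Lemma nfilter_rule n (F : L -> Prop) : (0 < n)%N -> n_filter n F -> Rule n F.
Proof.
case: n => // n _ [up H] z Hz.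
set X := [seq z k | k <- iota 0 n.+2].
have X0 : X != [::] by [].
have XF : forall u, u \in X -> F u.
  move=> u /mapP[k]; rewrite mem_iota => /andP[_ kn] ->.
  pose i := if k == 0 then 1 else 0.
  apply: (up (om z n.+1 i)); first by apply: Hz; rewrite /i; case: (k).
  by apply: om_le => //; rewrite /i; case: (k).
have := H (z 0) [seq z k | k <- iota 1 n.+1] XF.
have -> : bigmeet (z 0) [seq z k | k <- iota 1 n.+1] = lmeet X (z 0) by [].
move=> H1; apply: (up (lmeet X (z 0))); last first.
  apply/le_fm => k kn; apply: lmeet_le; apply/mapP; exists k => //.
  by rewrite mem_iota.
apply: H1 => y t yX tX st.
set Y := y :: t.
have YX : {subset Y <= X} by move=> u; rewrite inE => /orP[/eqP->|/tX].
pose idx u := index u X.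
have : ~~ (all (fun i => i \in map idx Y) (iota 0 n.+2)).
  apply/negP => /allP sub.
  have := uniq_leq_size (iota_uniq 0 n.+2) sub.
  by rewrite size_map /= size_iota ltnNge (leq_trans st) ?leqnSn.
case/allPn => i; rewrite mem_iota /= => iin iY.
apply: (up (om z n.+1 i)); first by apply: Hz.
have -> : bigmeet y t = lmeet Y y by [].
apply: le_lmeetP => // u uY.
have uX := YX u uY.
have iu : (idx u < size X)%N by rewrite /idx index_mem.
have sX : size X = n.+2 by rewrite size_map size_iota.
have iu' : (idx u < n.+2)%N by rewrite -sX.
have -> : u = z (idx u).
  have e : nth (z 0) [seq z k | k <- iota 0 n.+2] (idx u) = u := nth_index (z 0) uX.
  rewrite (nth_map 0) in e; last by rewrite size_iota.
  rewrite nth_iota in e; last exact: iu'.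
  rewrite add0n in e.
  by rewrite -{1}e.
apply: om_le => //.
by apply: contra iY => /eqP <-; exact: (map_f idx uY).
Qed.

End NFilter.

Section NFilter2.
Context {d : Order.disp_t} {L : distrLatticeType d}.

Lemma mem_nth_take (x : L) Y i k : (k < i)%N -> (k < size Y)%N -> nth x Y k \in take i Y.
Proof. by move=> ki kY; rewrite -(nth_take _ ki); apply: mem_nth; rewrite size_take; case: ifP. Qed.

Lemma mem_nth_drop (x : L) Y i k : (i <= k)%N -> (k < size Y)%N -> nth x Y k \in drop i Y.
Proof.
move=> ik kY; rewrite -(subnKC ik) -nth_drop; apply: mem_nth.
by rewrite size_drop ltn_sub2r // (leq_ltn_trans ik).
Qed.

Lemma rule_nfilter n (F : L -> Prop) : (0 < n)%N -> upset F -> Rule n F -> n_filter n F.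
Proof.
case: n => // n _ up R; split => // x s XF H.
set X := x :: s.
suff key : forall m (Y : seq L), (size Y <= m)%N -> Y != [::] -> {subset Y <= X} ->
    F (lmeet Y x).
  exact: (key (size X) X (leqnn _) isT (fun u h => h)).
elim=> [|m IH] Y sY Y0 YX; first by case: Y sY Y0 {YX}.
case: (leqP (size Y) n.+1) => [Yle|Ygt].
  case: Y sY Y0 YX Yle => // y t _ _ YX Yle.
  apply: H => //; first by apply: YX; rewrite mem_head.
  by move=> u ut; apply: YX; rewrite inE ut orbT.
set N := n.+1.
pose z k := if (k < N)%N then nth x Y k else lmeet (drop N Y) x.
have dN0 : drop N Y != [::] by rewrite -size_eq0 size_drop subn_eq0 -ltnNge.
have zN : z N = lmeet (drop N Y) x by rewrite /z ltnn.
have zk : forall k, (k < N)%N -> z k = nth x Y k by move=> k kN; rewrite /z kN.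
apply: (up (fm z N)); last first.
  apply: le_lmeetP => // u uY.
  have e := nth_index x uY; set k := index u Y in e.
  have kY : (k < size Y)%N by rewrite index_mem.
  case: (ltnP k N) => kN.
    by apply: (le_trans (fm_le z (ltnW kN))); rewrite zk // e.
  apply: (le_trans (fm_le z (leqnn N))); rewrite zN; apply: lmeet_le.
  by rewrite -e; apply: mem_nth_drop.
apply: R => i iN.
have sYm : (size Y <= m.+1)%N := sY.
case: (ltnP i N) => iN'.
  pose Yi := take i Y ++ drop i.+1 Y.
  have sYi : size Yi = (size Y).-1.
    rewrite /Yi size_cat size_take size_drop.
    have iY : (i < size Y)%N by apply: ltn_trans Ygt.
    by rewrite iY; lia.
  apply: (up (lmeet Yi x)).
    apply: IH.
    - by rewrite sYi -subn1 leq_subLR add1n.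
    - by rewrite -size_eq0 sYi -lt0n -subn1 subn_gt0 (leq_trans _ Ygt).
    - by move=> u; rewrite mem_cat => /orP[/mem_take|/mem_drop]; apply: YX.
  apply/le_om => // k kN ki.
  case: (ltnP k N) => kN'.
    rewrite zk //; apply: lmeet_le; rewrite mem_cat.
    have kY : (k < size Y)%N by apply: ltn_trans Ygt.
    case: (ltngtP k i) ki => // [ki|ik] _.
      by rewrite mem_nth_take.
    by rewrite mem_nth_drop ?orbT.
  have -> : k = N by apply/eqP; rewrite eqn_leq kN kN'.
  rewrite zN; apply: le_lmeetP => // u uD.
  apply: lmeet_le; rewrite mem_cat; apply/orP; right.
  by move: uD; rewrite -(subnK iN') -drop_drop => /mem_drop.
have -> : i = N by apply/eqP; rewrite eqn_leq iN iN'.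
pose Yn := take N Y.
have sYn : size Yn = N by rewrite size_take Ygt.
apply: (up (lmeet Yn x)).
  apply: IH.
  - by rewrite sYn -ltnS (leq_trans Ygt).
  - by rewrite -size_eq0 sYn.
  - by move=> u /mem_take; apply: YX.
apply/le_om => // k kN kN'.
have kN2 : (k < N)%N by rewrite ltn_neqAle kN' kN.
rewrite zk //; apply: lmeet_le; apply: mem_nth_take => //.
exact: ltn_trans Ygt.
Qed.

Lemma nfilterE n (F : L -> Prop) : (0 < n)%N -> n_filter n F <-> upset F /\ Rule n F.
Proof.
move=> n0; split; first by move=> H; split; [case: n n0 H => // n _ [] | exact: nfilter_rule].
by case=> up R; apply: rule_nfilter.
Qed.

End NFilter2.


Record dlax (T : Type) (m j : T -> T -> T) : Prop := DLax {
  mC : forall x y, m x y = m y x; jC : forall x y, j x y = j y x;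
  mA : forall x y z, m x (m y z) = m (m x y) z;
  jA : forall x y z, j x (j y z) = j (j x y) z;
  mK : forall x y, m x (j x y) = x; jK : forall x y, j x (m x y) = x;
  mD : forall x y z, m (j x y) z = j (m x z) (m y z) }.

Definition gdl (T : Type) (m j : T -> T -> T) (H : dlax m j) : Type := T.

Section GDL.
Variables (T : Type) (m j : T -> T -> T) (H : dlax m j).
HB.instance Definition _ := gen_eqMixin (gdl H).
HB.instance Definition _ := gen_choiceMixin (gdl H).
Definition gm : gdl H -> gdl H -> gdl H := m.
Definition gj : gdl H -> gdl H -> gdl H := j.
Let mxx : idempotent_op gm.
Proof. move=> x; have := mK H x (m x x); rewrite (jK H) => e; exact: e. Qed.
Let mC' : commutative gm. Proof. exact: (mC H). Qed.
Let jC' : commutative gj. Proof. exact: (jC H). Qed.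
Let mA' : associative gm. Proof. exact: (mA H). Qed.
Let jA' : associative gj. Proof. exact: (jA H). Qed.
Let mK' : forall y x : gdl H, gm x (gj x y) = x. Proof. move=> y x; exact: (mK H). Qed.
Let jK' : forall y x : gdl H, gj x (gm x y) = x. Proof. move=> y x; exact: (jK H). Qed.
Let mD' : left_distributive gm gj. Proof. move=> x y z; exact: (mD H). Qed.
HB.instance Definition _ := @Order.isMeetJoinDistrLattice.Build (Order.Disp tt tt) (gdl H)
  (fun x y => gm x y == x) (fun x y => (y != x) && (gm x y == x)) gm gj
  (fun _ _ => erefl) (fun _ _ => erefl) mC' jC' mA' jA' mK' jK' mD' mxx.
Lemma gdl_meetE (x y : gdl H) : x `&` y = m x y. Proof. by []. Qed.
Lemma gdl_joinE (x y : gdl H) : x `|` y = j x y. Proof. by []. Qed.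
End GDL.

Lemma K_ext (K : fclass) d (L : distrLatticeType d) (F G : L -> Prop) :
  K _ L F -> (forall x, F x <-> G x) -> K _ L G.
Proof.
move=> KF FG; have -> : G = F by apply: funext => x; apply: propext; split => /FG.
exact: KF.
Qed.

Lemma sval_inj T (P : T -> Prop) (a b : {x | P x}) : sval a = sval b -> a = b.
Proof. by case: a b => a pa [b pb] /= ab; apply: eq_exist. Qed.

Section Prod.
Variables (I : Type) (dI : I -> Order.disp_t) (A : forall i, distrLatticeType (dI i)).
Definition pT := forall i, A i.
Definition pm (f g : pT) : pT := fun i => f i `&` g i.
Definition pj (f g : pT) : pT := fun i => f i `|` g i.
Lemma prod_ax : dlax pm pj.
Proof.
split=> *; apply: functional_extensionality_dep => i; rewrite /pm /pj.
- exact: meetC. - exact: joinC. - exact: meetA. - exact: joinA.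
- exact: joinKI. - exact: meetKU. - exact: meetUl.
Qed.
Definition prodL := gdl prod_ax.
End Prod.

Section Img.
Variables (T : Type) (m j : T -> T -> T) (H : dlax m j) (P : T -> Prop).
Hypotheses (Pm : forall a b, P a -> P b -> P (m a b)) (Pj : forall a b, P a -> P b -> P (j a b)).
Definition sT := {x : T | P x}.
Definition sm (a b : sT) : sT := exist P (m (sval a) (sval b)) (Pm (svalP a) (svalP b)).
Definition sj (a b : sT) : sT := exist P (j (sval a) (sval b)) (Pj (svalP a) (svalP b)).
Lemma sub_ax : dlax sm sj.
Proof.
split=> *; apply: sval_inj => /=.
- exact: (mC H). - exact: (jC H). - exact: (mA H). - exact: (jA H).
- exact: (mK H). - exact: (jK H). - exact: (mD H).
Qed.
Definition subL := gdl sub_ax.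
End Img.

Lemma subdirect (K : fclass) : filter_class K ->
  forall (I : Type) (dI : I -> Order.disp_t) (A : forall i, distrLatticeType (dI i))
    (F : forall i, A i -> Prop), (forall i, K _ (A i) (F i)) ->
  forall d (L : distrLatticeType d) (h : forall i, L -> A i), (forall i, lhom (h i)) ->
  K _ L (fun x => forall i, F i (h i x)).
Proof.
case=> isoK subK prodK preK I dI A F KA d L h hh.
have KP : K _ (prodL A) (fun f => forall i, F i (f i)).
  apply: (prodK I dI A F KA _ (prodL A) (fun i f => f i)).
  - by move=> i x y.
  - by move=> b b' e; apply: functional_extensionality_dep.
  - by move=> a; exists a.
pose Hx (x : L) : prodL A := fun i => h i x.
have HM : forall x y, Hx (x `&` y) = Hx x `&` Hx y.
  by move=> x y; apply: functional_extensionality_dep => i; rewrite /Hx (proj1 (hh i x y)).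
have HJ : forall x y, Hx (x `|` y) = Hx x `|` Hx y.
  by move=> x y; apply: functional_extensionality_dep => i; rewrite /Hx (proj2 (hh i x y)).
pose P (f : pT A) := exists x, Hx x = f.
have Pm : forall a b, P a -> P b -> P (pm a b).
  by move=> a b [x <-] [y <-]; exists (x `&` y); rewrite HM.
have Pj : forall a b, P a -> P b -> P (pj a b).
  by move=> a b [x <-] [y <-]; exists (x `|` y); rewrite HJ.
pose S := subL (prod_ax A) Pm Pj.
have KS : K _ S (fun s => forall i, F i (sval s i)).
  apply: (subK _ (prodL A) _ _ S (fun s => sval s)) KP.
  - by move=> x y.
  - by move=> a b /sval_inj.
pose g (x : L) : S := exist P (Hx x) (ex_intro _ x erefl).
have := preK _ L _ S _ g _ _ KS; apply.
- by move=> x y; split; apply: sval_inj => /=; [exact: HM|exact: HJ].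
- by move=> [f [x e]]; exists x; apply: sval_inj => /=.
Qed.


Lemma zorn_pred (T : Type) (P : (T -> Prop) -> Prop) (X0 : T -> Prop) : P X0 ->
  (forall C : (T -> Prop) -> Prop, (exists X, C X) -> (forall X, C X -> P X) ->
     (forall X Y, C X -> C Y -> (forall t, X t -> Y t) \/ (forall t, Y t -> X t)) ->
     P (fun t => exists X, C X /\ X t)) ->
  exists M, P M /\ forall X, P X -> (forall t, M t -> X t) -> forall t, X t -> M t.
Proof.
move=> PX0 Hch.
pose P' (A : classical_sets.set T) := A = classical_sets.set0 \/ P A.
have [A [PA Amax]] : exists A, P' A /\ forall B, classical_sets.proper A B -> ~ P' B.
  apply: classical_sets.Zorn_bigcup => F FP Ftot.
  case: (pselect (exists X, F X /\ P X)) => [[X [FX PX]]|noP].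
  - right.
    have -> : classical_sets.bigcup F (fun X => X) = (fun t => exists X, (F X /\ P X) /\ X t).
      apply: funext => t; apply: propext; split.
      + case=> Y FY Yt; exists Y; split => //; split => //.
        by case: (FP Y FY) => // e; rewrite e in Yt.
      + by case=> Y [[FY _] Yt]; exists Y.
    apply: Hch.
    + by exists X.
    + by move=> Y [].
    + move=> Y Z [FY _] [FZ _].
      by case: (Ftot Y Z FY FZ) => h; [left|right] => t; apply: h.
  - left; apply: funext => t; apply: propext; split => // -[Y FY Yt].
    case: (FP Y FY) => e; first by rewrite e in Yt.
    by exfalso; apply: noP; exists Y.
have nb : forall X, P X -> (forall t, A t -> X t) -> forall t, X t -> A t.
  move=> X PX AX t Xt; apply: NNPP => nAt; apply: (Amax X); last by right.
  split; first exact: AX.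
  by move=> XA; apply: nAt; apply: XA.
exists A; split => //.
case: PA => // e.
have X0A : X0 = A.
  apply: funext => t; apply: propext; split; first by apply: nb => // s; rewrite e.
  by rewrite e.
by rewrite -X0A.
Qed.

Section Sep.
Context {d : Order.disp_t} {L : distrLatticeType d}.
Implicit Types (F G I : L -> Prop) (a x y : L).

Definition ideal I := (forall x y, I x -> y <= x -> I y) /\ (forall x y, I x -> I y -> I (x `|` y)).
Definition filt F := upset F /\ (forall x y, F x -> F y -> F (x `&` y)).

Lemma max_ideal F a : upset F -> ~ F a ->
  exists I, [/\ ideal I, I a, (forall x, I x -> ~ F x) &
                (forall x, ~ I x -> exists i, I i /\ F (x `|` i))].
Proof.
move=> up Fa.
pose P (I : L -> Prop) := [/\ ideal I, I a & forall x, I x -> ~ F x].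
have [I [[idI Ia dis] Imax]] : exists M, P M /\ forall X, P X -> (forall t, M t -> X t) -> forall t, X t -> M t.
  apply: (@zorn_pred _ P (fun y => y <= a)).
    split => //; first split.
    - by move=> x y xa yx; apply: le_trans xa.
    - by move=> x y xa ya; rewrite leUx xa ya.
    - by move=> x xa Fx; apply: Fa; apply: up xa.
  move=> C [X CX] CP Ctot; split.
  - split.
    + move=> x y [Y [CY Yx]] yx; exists Y; split => //.
      by case: (CP Y CY) => [[dY _] _ _]; apply: dY yx.
    + move=> x y [Y [CY Yx]] [Z [CZ Zy]].
      case: (Ctot Y Z CY CZ) => sub.
      * exists Z; split => //; case: (CP Z CZ) => [[_ jZ] _ _]; apply: jZ => //; exact: sub.
      * exists Y; split => //; case: (CP Y CY) => [[_ jY] _ _]; apply: jY => //; exact: sub.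
  - by exists X; split => //; case: (CP X CX).
  - by move=> x [Y [CY Yx]]; case: (CP Y CY) => _ _; apply.
exists I; split => // x nIx.
pose J y := exists i, I i /\ y <= x `|` i.
have : ~ P J.
  move=> PJ; apply: nIx; apply: (Imax J PJ).
    by move=> t It; exists t; split => //; apply: leUr.
  by exists a; split => //; apply: leUl.
move=> nPJ; apply: NNPP => nex; apply: nPJ; split.
- split.
  + by move=> y z [i [Ii yi]] zy; exists i; split => //; apply: le_trans yi.
  + move=> y z [i [Ii yi]] [j [Ij zj]]; exists (i `|` j); split.
      by case: idI => _; apply.
    rewrite leUx; apply/andP; split.
      by apply: le_trans yi _; apply: leU2 => //; apply: leUl.
    by apply: le_trans zj _; apply: leU2 => //; apply: leUr.
- by exists a; split => //; apply: leUr.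
- move=> y [i [Ii yi]] Fy; apply: nex; exists i; split => //.
  exact: up yi.
Qed.

Lemma ideal_jn I b (z : nat -> L) S : ideal I -> I b -> (forall k, k \in S -> I (z k)) -> I (jn b z S).
Proof.
move=> [_ jI] Ib; elim: S => [|k S IH] //= H.
apply: jI; first by apply: H; rewrite mem_head.
by apply: IH => k' k'S; apply: H; rewrite inE k'S orbT.
Qed.

Lemma le_jn b (z : nat -> L) S k : k \in S -> z k <= jn b z S.
Proof. by move=> kS; move: (lexx (jn b z S)); rewrite jn_le => /andP[_ /allP]; apply. Qed.

Lemma b_le_jn b (z : nat -> L) S : b <= jn b z S.
Proof. by move: (lexx (jn b z S)); rewrite jn_le => /andP[]. Qed.

Lemma mt_joinr b c (z : nat -> L) S :
  mt (b `|` c) (fun k => z k `|` c) S = mt b z S `|` c.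
Proof. by elim: S => [|k S IH] //=; rewrite IH joinIl. Qed.

Lemma jn_meetr b c (z : nat -> L) S :
  jn b z S `&` c = jn (b `&` c) (fun k => z k `&` c) S.
Proof. by elim: S => [|k S IH] //=; rewrite -IH meetUl. Qed.

Lemma rule_compl n F I a : (0 < n)%N -> upset F -> Rule n F ->
  ideal I -> I a -> (forall x, I x -> ~ F x) ->
  (forall x, ~ I x -> exists i, I i /\ F (x `|` i)) ->
  Rule n (fun x => ~ I x).
Proof.
move=> n0 up R idI Ia dis mx z Hz nfm.
have ex : forall i, exists c, (i <= n)%N -> I c /\ F (om z n i `|` c).
  move=> i; case: (leqP i n) => iN.
    by case: (mx _ (Hz i iN)) => c [Ic Fc]; exists c.
  by exists a.
pose c i := sval (cid (ex i)).
have cP : forall i, (i <= n)%N -> I (c i) /\ F (om z n i `|` c i).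
  by move=> i; rewrite /c; case: cid.
pose cs := jn a c (iota 0 n.+1).
have Ics : I cs by apply: ideal_jn => // k; rewrite mem_iota => /andP[_ kn]; case: (cP k kn).
have ccs : forall i, (i <= n)%N -> c i <= cs by move=> i iN; apply: le_jn; rewrite mem_iota.
pose w k := z k `|` cs.
have Fw : F (fm w n).
  apply: R => i iN; apply: (up _ _ (proj2 (cP i iN))).
  apply/le_om => // k kn ki; apply: leU2; first exact: om_le.
  exact: ccs.
have : fm w n = fm z n `|` cs by rewrite /fm /w -mt_joinr.
move=> e; rewrite e in Fw; apply: (dis _ _ Fw).
by case: idI => _; apply.
Qed.

End Sep.


Section LemX.
Context {d : Order.disp_t} {L : distrLatticeType d}.
Implicit Types (F G : L -> Prop) (a x y : L).
Variable (I : L -> Prop).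
Hypothesis idI : ideal I.
Let G x := ~ I x.

Lemma G_up : upset G.
Proof. by move=> x y Gx xy Iy; apply: Gx; case: idI => dI _; apply: dI xy. Qed.

Definition maxfilt (P : L -> Prop) := [/\ filt P, (forall x, P x -> G x) &
  forall Q, filt Q -> (forall x, Q x -> G x) -> (forall x, P x -> Q x) -> forall x, Q x -> P x].

Lemma ext_maxfilt x : G x -> exists P, maxfilt P /\ P x.
Proof.
move=> Gx.
pose P Q := [/\ filt Q, (forall y, Q y -> G y) & Q x].
have [M [[fM MG Mx] Mmax]] : exists M, P M /\ forall X, P X -> (forall t, M t -> X t) -> forall t, X t -> M t.
  apply: (@zorn_pred _ P (fun y => x <= y)).
    split => //; first split.
    - by move=> y z xy yz; apply: le_trans yz.
    - by move=> y z xy xz; rewrite lexI xy xz.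
    - by move=> y xy; apply: G_up xy.
  move=> C [X CX] CP Ctot; split.
  - split.
    + move=> y z [Y [CY Yy]] yz; exists Y; split => //.
      by case: (CP Y CY) => [[uY _] _ _]; apply: uY yz.
    + move=> y z [Y [CY Yy]] [Z [CZ Zz]].
      case: (Ctot Y Z CY CZ) => sub.
      * exists Z; split => //; case: (CP Z CZ) => [[_ mZ] _ _]; apply: mZ => //; exact: sub.
      * exists Y; split => //; case: (CP Y CY) => [[_ mY] _ _]; apply: mY => //; exact: sub.
  - by move=> y [Y [CY Yy]]; case: (CP Y CY) => _ YG _; exact: YG.
  - by exists X; split => //; case: (CP X CX).
exists M; split => //; split => // Q fQ QG MQ; apply: Mmax => //.
by rewrite /P; split => //; apply: MQ.
Qed.

Lemma incompat P Q u0 v0 : maxfilt P -> filt Q -> Q v0 -> P u0 ->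
  (exists x, Q x /\ ~ P x) -> exists u v, [/\ P u, Q v & I (u `&` v)].
Proof.
move=> [[uP mP] PG Pmax] [uQ mQ] Qv0 Pu0 [x [Qx nPx]].
apply: NNPP => nex.
pose T y := exists u v, [/\ P u, Q v & u `&` v <= y].
have fT : filt T.
  split.
  - by move=> y z [u [v [Pu Qv uv]]] yz; exists u, v; split => //; apply: le_trans yz.
  - move=> y z [u [v [Pu Qv uv]]] [u' [v' [Pu' Qv' uv']]].
    exists (u `&` u'), (v `&` v'); split; [exact: mP | exact: mQ |].
    rewrite lexI; apply/andP; split.
      by apply: le_trans uv; apply: leI2; apply: leIl.
    by apply: le_trans uv'; apply: leI2; apply: leIr.
have TG : forall y, T y -> G y.
  move=> y [u [v [Pu Qv uv]]] Iy; apply: nex; exists u, v; split => //.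
  by case: idI => dI _; apply: dI uv.
have PT : forall y, P y -> T y by move=> y Py; exists y, v0; split => //; apply: leIl.
have QT : forall y, Q y -> T y by move=> y Qy; exists u0, y; split => //; apply: leIr.
by apply: nPx; apply: (Pmax T fT TG PT); apply: QT.
Qed.

Lemma filt_mt P b (z : nat -> L) S : filt P -> P b -> (forall k, k \in S -> P (z k)) -> P (mt b z S).
Proof.
move=> [_ mP] Pb; elim: S => [|k S IH] //= H.
apply: mP; first by apply: H; rewrite mem_head.
by apply: IH => k' k'S; apply: H; rewrite inE k'S orbT.
Qed.

Lemma mt_le b (z : nat -> L) S k : k \in S -> mt b z S <= z k.
Proof. by move=> kS; move: (lexx (mt b z S)); rewrite le_mt => /andP[_ /allP]; apply. Qed.

Definition xj n (y : nat -> L) i := jn (y (if i == 0 then 1 else 0)) y [seq j <- iota 0 n.+1 | j != i].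

Lemma calc n (y : nat -> L) : (0 < n)%N ->
  (forall i j, (i <= n)%N -> (j <= n)%N -> i != j -> I (y i `&` y j)) ->
  I (fm (xj n y) n).
Proof.
move=> n0 Hy; case: (idI) => dI jI.
have claim : forall m, (m <= n)%N -> exists c, I c /\
    forall w, (forall i, (i <= m)%N -> w <= xj n y i) -> w <= jn c y (iota m.+1 (n - m)).
  elim=> [|m IH] mn.
    exists (y 0 `&` y 1); split; first by apply: Hy.
    move=> w Hw; apply: le_trans (Hw 0 (leqnn 0)) _.
    rewrite /xj /= jn_le; apply/andP; split.
      by apply: le_jn; rewrite subn0 mem_iota; lia.
    apply/allP => j; rewrite mem_filter mem_iota => /andP[j0 /andP[_ jn']].
    by apply: le_jn; rewrite subn0 mem_iota; lia.
  have [c [Ic Hc]] := IH (ltnW mn).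
  set x' := xj n y m.+1.
  have Iyx : I (y m.+1 `&` x').
    rewrite meetC /x' /xj jn_meetr; apply: ideal_jn => //.
      by apply: Hy => //.
    by move=> k; rewrite mem_filter mem_iota => /andP[km /andP[_ kn]]; apply: Hy; rewrite // -ltnS.
  exists (c `|` (y m.+1 `&` x')); split; first by apply: jI.
  move=> w Hw.
  have w1 : w <= jn c y (iota m.+1 (n - m)) by apply: Hc => i im; apply: Hw; apply: ltnW.
  have w2 : w <= x' by apply: Hw.
  have : w <= jn c y (iota m.+1 (n - m)) `&` x' by rewrite lexI w1 w2.
  move/le_trans; apply.
  have -> : (n - m = (n - m.+1).+1)%N by lia.
  rewrite jn_meetr /= leUx; apply/andP; split.
    by apply: le_trans (b_le_jn _ _ _); apply: leUr.
  rewrite jn_le; apply/andP; split.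
    apply: le_trans (b_le_jn _ _ _); apply: le_trans (leUl _ _); exact: leIl.
  apply/allP => k kS; apply: le_trans (le_jn _ _ kS); exact: leIl.
have [c [Ic Hc]] := claim n (leqnn n).
apply: dI Ic _; rewrite subnn /= in Hc; apply: Hc => i iN; exact: fm_le.
Qed.


Lemma cover n : (0 < n)%N -> Rule n G ->
  exists Phi : nat -> L -> Prop, (forall k, filt (Phi k) /\ forall x, Phi k x -> G x) /\
    (forall x, G x -> exists k, (k < n)%N /\ Phi k x).
Proof.
move=> n0 RG; apply: NNPP => nc.
have build : forall k, (k <= n.+1)%N -> exists Ps : nat -> L -> Prop,
    (forall i, (i < k)%N -> maxfilt (Ps i) /\ exists x, Ps i x) /\
    (forall i j, (i < j)%N -> (j < k)%N -> exists x, Ps j x /\ ~ Ps i x).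
  elim=> [|k IH] kn.
    by exists (fun _ _ => False); split.
  have [Ps [P1 P2]] := IH (ltnW kn).
  pose P' i := if (i < k)%N then Ps i else (fun _ : L => False).
  have [x [Gx nx]] : exists x, G x /\ forall i, (i < n)%N -> ~ P' i x.
    apply: NNPP => nex; apply: nc; exists P'; split.
      move=> i; rewrite /P'; case: ltnP => ik.
        by case: (P1 i ik) => [[fP PG _] _]; split.
      by split => //; split.
    move=> x Gx; apply: NNPP => nk; apply: nex; exists x; split => // i i_n Pix.
    by apply: nk; exists i.
  have [T [mT Tx]] := ext_maxfilt Gx.
  exists (fun i => if (i < k)%N then Ps i else T); split.
    move=> i; rewrite ltnS leq_eqVlt => /orP[/eqP ->|ik]; first by rewrite ltnn; split => //; exists x.
    by rewrite ik; apply: P1.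
  move=> i j ij; rewrite ltnS leq_eqVlt => /orP[/eqP jk|jk].
    subst j; rewrite ltnn ij; exists x; split => //.
    have := nx i; rewrite /P' ij; apply; lia.
  by rewrite jk (ltn_trans ij jk); apply: P2.
have [Ps [P1 P2]] := build n.+1 (leqnn _).
have ex_e : forall i, exists e, (i <= n)%N -> Ps i e.
  move=> i; case: (leqP i n) => iN.
    by case: (P1 i iN) => _ [e He]; exists e.
  by case: (P1 0 isT) => _ [e He]; exists e.
pose e i := sval (cid (ex_e i)).
have eP : forall i, (i <= n)%N -> Ps i (e i) by move=> i; rewrite /e; case: cid.
have ex_p : forall i j, exists p : L * L, (i <= n)%N -> (j <= n)%N -> i != j ->
    [/\ Ps i p.1, Ps j p.2 & I (p.1 `&` p.2)].
  move=> i j; case: (boolP [&& (i <= n)%N, (j <= n)%N & i != j]) => [/and3P[iN jN ij]|nc'].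
  - case: (ltngtP i j) ij => // [ilj|jli] _.
    + have [mi _] := P1 i iN; have [[fj _ _] [v0 Pv0]] := P1 j jN.
      have [u [v [Pu Pv Iuv]]] := incompat mi fj Pv0 (eP i iN) (P2 i j ilj jN).
      by exists (u, v).
    + have [mj _] := P1 j jN; have [[fi _ _] [v0 Pv0]] := P1 i iN.
      have [u [v [Pu Pv Iuv]]] := incompat mj fi Pv0 (eP j jN) (P2 j i jli iN).
      by exists (v, u); rewrite meetC.
  - exists (e 0, e 0) => iN jN ij; exfalso; move: nc'; rewrite iN jN ij.
    done.
pose p i j := sval (cid (ex_p i j)).
have pP : forall i j, (i <= n)%N -> (j <= n)%N -> i != j ->
    [/\ Ps i (p i j).1, Ps j (p i j).2 & I ((p i j).1 `&` (p i j).2)].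
  by move=> i j; rewrite /p; case: cid.
pose y i := mt (e i) (fun j => (p i j).1 `&` (p j i).2) [seq j <- iota 0 n.+1 | j != i].
have yP : forall i, (i <= n)%N -> Ps i (y i).
  move=> i iN; have [[fP _ _] _] := P1 i iN.
  apply: filt_mt => //; first exact: eP.
  move=> k; rewrite mem_filter mem_iota => /andP[ki /andP[_ kn]].
  have ik : i != k by rewrite eq_sym.
  have [a1 _ _] := pP i k iN kn ik.
  have [_ a2 _] := pP k i kn iN ki.
  by case: fP => _ mP; apply: mP.
have Iyy : forall i j, (i <= n)%N -> (j <= n)%N -> i != j -> I (y i `&` y j).
  move=> i j iN jN ij; have [_ _ I1] := pP i j iN jN ij.
  case: idI => dI _; apply: dI I1 _; apply: leI2.
  - apply: le_trans (mt_le _ _ _) _; last exact: leIl.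
    by rewrite mem_filter mem_iota eq_sym ij; lia.
  - apply: le_trans (mt_le _ _ _) _; last exact: leIr.
    by rewrite mem_filter mem_iota ij; lia.
have Ifm := calc n0 Iyy.
suff HG : forall i, (i <= n)%N -> G (om (xj n y) n i) by exact: (RG _ HG Ifm).
move=> i iN; apply: (@G_up (y i)).
  by move=> Iyi; have [[_ PG _] _] := P1 i iN; exact: PG _ (yP i iN) Iyi.
apply/le_om => // k kn ki; rewrite /xj; apply: le_jn.
by rewrite mem_filter mem_iota eq_sym ki; lia.
Qed.

End LemX.

Import Order.DefaultSetSubsetOrder.

Section Prime.
Context {d : Order.disp_t} {L : distrLatticeType d}.
Implicit Types (F P : L -> Prop) (a x y : L).

Lemma filt_rule1 P : filt P -> Rule 1 P.
Proof.
move=> [uP mP] z Hz.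
apply: (uP (om z 1 0 `&` om z 1 1)); first by apply: mP; apply: Hz.
apply/le_fm => k; case: k => [|[|//]] _.
- by apply: le_trans (leIr _ _) _; apply: om_le.
- by apply: le_trans (leIl _ _) _; apply: om_le.
Qed.

Lemma prime_hom P a : filt P -> ~ P a ->
  exists h : L -> bool, [/\ lhom h, forall x, P x -> h x & h a = false].
Proof.
move=> fP Pa; have [uP _] := fP.
have [J [idJ Ja dis mx]] := max_ideal uP Pa.
have RJ := @rule_compl _ _ 1 _ _ _ isT uP (filt_rule1 fP) idJ Ja dis mx.
case: (idJ) => dJ jJ.
exists (fun x => `[< ~ J x >]); split.
- move=> x y; split.
  + change (`[< ~ J (x `&` y) >] = `[< ~ J x >] && `[< ~ J y >]); rewrite -asbool_and; congr asbool; apply: propext; split.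
      by move=> nJ; split => Jz; apply: nJ; apply: dJ Jz _; [exact: leIl| exact: leIr].
    case=> nx ny Jxy.
    pose z k := if k == 0 then x else y.
    have Hz : forall i, (i <= 1)%N -> ~ J (om z 1 i).
      move=> i; case: i => [|[|//]] _ Jo.
      * by apply: ny; apply: dJ Jo _; apply/le_om => // -[|[|//]].
      * by apply: nx; apply: dJ Jo _; apply/le_om => // -[|[|//]].
    apply: (RJ z Hz); apply: dJ Jxy _; rewrite lexI; apply/andP; split.
    * exact: (@fm_le _ _ z 1 0 isT).
    * exact: (@fm_le _ _ z 1 1 isT).
  + change (`[< ~ J (x `|` y) >] = `[< ~ J x >] || `[< ~ J y >]); rewrite -asbool_or; congr asbool; apply: propext; split.
      move=> nJ; case: (classic (J x)) => Jx; last by left.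
      case: (classic (J y)) => Jy; last by right.
      by exfalso; apply: nJ; apply: jJ.
    by case=> nJ Jxy; apply: nJ; apply: dJ Jxy _; [exact: leUl | exact: leUr].
- by move=> x Px; apply/asboolP => Jx; exact: dis x Jx Px.
- by apply: asboolF => /(_ Ja).
Qed.

Lemma separation n F a : (0 < n)%N -> upset F -> Rule n F -> ~ F a ->
  exists H : L -> {set 'I_n}, [/\ lhom H, forall x, F x -> H x != set0 & H a = set0].
Proof.
move=> n0 up R Fa.
have [I [idI Ia dis mx]] := max_ideal up Fa.
have RG := rule_compl n0 up R idI Ia dis mx.
have [Phi [PhiP cov]] := cover idI n0 RG.
have ex : forall k, exists h : L -> bool, [/\ lhom h, forall x, Phi k x -> h x & h a = false].
  move=> k; have [fk kG] := PhiP k; apply: prime_hom fk _.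
  by move=> Pa; exact: kG a Pa Ia.
pose hh k := sval (cid (ex k)).
have hhP : forall k, [/\ lhom (hh k), forall x, Phi k x -> hh k x & hh k a = false].
  by move=> k; rewrite /hh; case: cid.
exists (fun x => [set k : 'I_n | hh k x]); split.
- move=> x y; split; apply/setP => k; have [hl _ _] := hhP k.
  + by rewrite in_setI !inE (proj1 (hl x y)).
  + by rewrite in_setU !inE (proj2 (hl x y)).
- move=> x Fx; have nI : ~ I x by move=> Ix; exact: dis x Ix Fx.
  have [k [kn Pk]] := cov x nI.
  apply/set0Pn; exists (Ordinal kn); rewrite inE /=.
  by have [_ hP _] := hhP k; apply: hP.
- by apply/setP => k; rewrite !inE; have [_ _ ->] := hhP k.
Qed.

End Prime.


Notation Bn n := {set 'I_n}.
Definition nz n (T : Bn n) : Prop := T != set0.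

Section KLemmas.

Lemma K_full (K : fclass) (fK : filter_class K) d (L : distrLatticeType d) : K _ L (fun _ => True).
Proof.
have := @subdirect K fK False (fun _ => d) (fun _ => L) (fun _ _ => True)
  (fun i => match i with end) _ L (fun i => match i with end) (fun i => match i with end).
by move/K_ext; apply => x; split => // _ [].
Qed.

Lemma K_empty (K : fclass) (fK : filter_class K) d (A : distrLatticeType d) (F : A -> Prop) c d' (L : distrLatticeType d') :
  K _ A F -> ~ F c -> K _ L (fun _ => False).
Proof.
move=> KA Fc.
have := @subdirect K fK unit (fun _ => d) (fun _ => A) (fun _ => F) (fun _ => KA) _ L
  (fun _ _ => c) (fun _ x y => conj (esym (meetxx c)) (esym (joinxx c))).
by move/K_ext; apply => x; split => // /(_ tt).
Qed.

Lemma DLn_sub (K : fclass) (fK : filter_class K) n : (0 < n)%N -> K _ (Bn n) (@nz n) ->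
  forall d (L : distrLatticeType d) (F : L -> Prop), n_filter n F -> K _ L F.
Proof.
move=> n0 KB d L F /(nfilterE _ n0) [up R].
have ex : forall a : {a : L | ~ F a}, exists H : L -> Bn n,
    [/\ lhom H, forall x, F x -> H x != set0 & H (sval a) = set0].
  by case=> a Fa; apply: separation.
pose H i := sval (cid (ex i)).
have HP : forall i, [/\ lhom (H i), forall x, F x -> H i x != set0 & H i (sval i) = set0].
  by move=> i; rewrite /H; case: cid.
have := @subdirect K fK {a : L | ~ F a} (fun _ => Order.SetSubsetOrder.subset_display)
  (fun _ => Bn n) (fun _ => @nz n) (fun _ => KB) _ L H (fun i => let: And3 h _ _ := HP i in h).
move/K_ext; apply => x; split.
  move=> Hx; apply: NNPP => Fx; have := Hx (exist _ x Fx).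
  by have [_ _ ->] := HP (exist _ x Fx); rewrite /nz eqxx.
by move=> Fx i; have [_ h _] := HP i; apply: h.
Qed.

End KLemmas.

Section Embed.
Context {d : Order.disp_t} {A : distrLatticeType d}.
Variables (k : nat) (f0 : A) (o : nat -> A).
Hypotheses (f0o : forall i, (i < k)%N -> f0 <= o i)
  (oo : forall i j, (i < k)%N -> (j < k)%N -> i != j -> o i `&` o j <= f0).

Implicit Types (T : {set 'I_k}).
Definition idx (T : Bn k) : seq nat := [seq val i | i <- enum T].
Definition phi (T : Bn k) : A := jn f0 o (idx T).

Lemma mem_idx T (i : 'I_k) : (val i \in idx T) = (i \in T).
Proof. by rewrite /idx (mem_map val_inj) mem_enum. Qed.

Lemma phi_le T w : phi T <= w <-> f0 <= w /\ forall i : 'I_k, i \in T -> o i <= w.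
Proof.
rewrite /phi jn_le; split.
  case/andP=> f0w /allP H; split => // i iT; apply: H; by rewrite mem_idx.
case=> f0w H; rewrite f0w; apply/allP => j /mapP[i]; rewrite mem_enum => iT ->.
exact: H.
Qed.

Lemma f0_le_phi T : f0 <= phi T. Proof. exact: b_le_jn. Qed.
Lemma o_le_phi T (i : 'I_k) : i \in T -> o i <= phi T.
Proof. by move=> iT; apply: le_jn; rewrite mem_idx. Qed.

Lemma phi_mono T T' : T \subset T' -> phi T <= phi T'.
Proof.
move=> /subsetP sub; apply/phi_le; split; first exact: f0_le_phi.
by move=> i iT; apply: o_le_phi; apply: sub.
Qed.

Lemma phi0 : phi set0 = f0.
Proof. by rewrite /phi /idx enum_set0. Qed.

Lemma phiU T T' : phi (T :|: T') = phi T `|` phi T'.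
Proof.
apply: le_anti; apply/andP; split.
  apply/phi_le; split; first by apply: le_trans (f0_le_phi T) (leUl _ _).
  move=> i; rewrite in_setU => /orP[iT|iT].
    by apply: le_trans (o_le_phi iT) (leUl _ _).
  by apply: le_trans (o_le_phi iT) (leUr _ _).
by rewrite leUx !phi_mono // ?subsetUl ?subsetUr.
Qed.

Lemma o_meet_phi T (i : 'I_k) : o i `&` phi T <= phi (T :&: [set i]).
Proof.
rewrite meetC /phi jn_meetr jn_le; apply/andP; split.
  by apply: le_trans (leIl _ _) (f0_le_phi _).
apply/allP => j /mapP[j' j'T ->].
rewrite mem_enum in j'T.
case: (eqVneq j' i) => [e|ji].
  subst j'; apply: le_trans (leIl _ _) _; apply: o_le_phi.
  by rewrite in_setI in_set1 eqxx j'T.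
apply: le_trans (oo (ltn_ord j') (ltn_ord i) _) (f0_le_phi _).
by apply: contra ji => /eqP /val_inj ->.
Qed.

Lemma phiI T T' : phi (T :&: T') = phi T `&` phi T'.
Proof.
apply: le_anti; apply/andP; split.
  by rewrite lexI !phi_mono // ?subsetIl ?subsetIr.
rewrite /phi jn_meetr jn_le; apply/andP; split.
  by apply: le_trans (leIl _ _) (f0_le_phi _).
apply/allP => j /mapP[i iT ->]; rewrite mem_enum in iT.
apply: le_trans (o_meet_phi T' i) _; apply: phi_mono.
apply/subsetP => x; rewrite !in_setI in_set1 => /andP[xT' /eqP xi].
by rewrite xT' -xi in iT *; rewrite iT.
Qed.

End Embed.

Lemma embedB (K : fclass) (fK : filter_class K) d (A : distrLatticeType d) (F : A -> Prop)
  k (f0 : A) (o : nat -> A) :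
  (forall i, (i < k)%N -> f0 <= o i) ->
  (forall i j, (i < k)%N -> (j < k)%N -> i != j -> o i `&` o j <= f0) ->
  K _ A F -> upset F -> ~ F f0 -> (forall i, (i < k)%N -> F (o i)) ->
  K _ (Bn k) (@nz k).
Proof.
move=> f0o oo KA up Ff0 Fo.
case: fK => _ subK _ _.
pose ph := @phi _ A k f0 o.
have sub : forall T T' : {set 'I_k}, ph T = ph T' -> T \subset T'.
  move=> T T' e; apply/subsetP => i iT; apply: NNPP => niT'.
  have h1 : o i <= ph T' by rewrite -e; apply: o_le_phi.
  have h2 : o i <= ph (T' :&: [set i]).
    apply: le_trans (o_meet_phi oo T' i); by rewrite lexI lexx h1.
  have E : T' :&: [set i] = set0.
    apply/setP => x; rewrite !inE; apply/negP => /andP[xT' /eqP xi].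
    by apply: niT'; rewrite -xi.
  rewrite E /ph phi0 in h2.
  by apply: Ff0; apply: up (Fo i (ltn_ord i)) h2.
have inj : injective ph.
  by move=> T T' e; apply/eqP; rewrite eqEsubset !sub.
have H := subK _ A F _ (Bn k) ph _ inj KA.
apply: K_ext; first apply: H.
  by move=> T T'; split; [exact: (phiI oo) | exact: phiU].
move=> T; split.
  move=> FT; apply/negP => /eqP T0; apply: Ff0; by rewrite T0 /ph phi0 in FT.
case/set0Pn => i iT; apply: up (Fo i (ltn_ord i)) _; exact: o_le_phi.
Qed.

Lemma notDLn_B (K : fclass) (fK : filter_class K) d (A : distrLatticeType d) (F : A -> Prop) m :
  K _ A F -> upset F -> ~ n_filter m F -> K _ (Bn m.+1) (@nz m.+1).
Proof.
move=> KA up nF.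
case: m nF => [|m] nF.
  have [b Fb] : exists b, F b.
    by apply: NNPP => nb; apply: nF; left => x Fx; apply: nb; exists x.
  have [c Fc] : exists c, ~ F c.
    by apply: NNPP => nc; apply: nF; right => x; apply: NNPP => Fx; apply: nc; exists x.
  apply: (@embedB K fK _ A F 1 (c `&` b) (fun _ => b)) => //.
  - by move=> i _; apply: leIr.
  - by move=> [|i] [|j].
  - by move=> Fcb; apply: Fc; apply: up Fcb (leIl _ _).
have nR : ~ Rule m.+1 F by move=> R; apply: nF; apply/nfilterE.
have [z [Hz nfz]] : exists z, (forall i, (i <= m.+1)%N -> F (om z m.+1 i)) /\ ~ F (fm z m.+1).
  apply: NNPP => nex; apply: nR => z Hz; apply: NNPP => nfz; apply: nex; exists z; split => //.
apply: (@embedB K fK _ A F m.+2 (fm z m.+1) (om z m.+1)) => //.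
- by move=> i _; apply: fm_le_om.
- move=> i j i_ j_ ij; apply/le_fm => l lm.
  case: (eqVneq l i) => [e|li].
    subst l; apply: le_trans (leIr _ _) _; apply: om_le => //.
  by apply: le_trans (leIl _ _) _; apply: om_le.
Qed.

Lemma fin_nfilter d (M : finDistrLatticeType d) (G : M -> Prop) :
  upset G -> n_filter (#|M|.+1) G.
Proof.
move=> up; split => // x s XF H.
set U := undup (x :: s).
have U0 : U != [::] by apply/eqP => U0; have := mem_head x s; rewrite -mem_undup -/U U0.
have e : bigmeet x s = lmeet U x.
  apply: le_anti; apply/andP; split.
    by apply: le_lmeetP => // u; rewrite mem_undup => uX; exact: (@lmeet_le _ _ (x :: s) x u uX).
  have -> : bigmeet x s = lmeet (x :: s) x by [].
  by apply: le_lmeetP => // u uX; apply: lmeet_le; rewrite mem_undup.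
rewrite e; case E : U U0 => [|y t] // _.
rewrite /lmeet /=; apply: H.
- by rewrite -mem_undup -/U E mem_head.
- by move=> u ut; rewrite -mem_undup -/U E inE ut orbT.
- have h : (size U <= #|M|)%N.
    by move/card_uniqP: (undup_uniq (x :: s)) => <-; apply: max_card.
  rewrite E in h; exact: (leqW h).
Qed.

Lemma DLomega_sub (K : fclass) (fK : filter_class K)
  (HB : forall n, (0 < n)%N -> K _ (Bn n) (@nz n)) d (L : distrLatticeType d) (F : L -> Prop) :
  @DL_omega _ L F -> K _ L F.
Proof.
case=> up [J [e [M [h [G [hG iff]]]]]].
have KM : forall j, K _ (M j) (G j).
  move=> j; exact: (@DLn_sub K fK (#|M j|.+1) isT (HB (#|M j|.+1) isT) _ (M j) (G j) (fin_nfilter (proj2 (hG j)))).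
have := @subdirect K fK J e (fun j => M j : distrLatticeType (e j)) G KM _ L h (fun j => proj1 (hG j)).
by move/K_ext; apply => x; split => /iff.
Qed.


Lemma part1 (K : fclass) :
  filter_class K -> ~ trivial_class K -> subclass K DL_inf ->
  subclass DL_omega K \/ exists n : nat, same_class K (DL_n n).
Proof.
move=> fK ntK sKi.
case: (classic (forall n, (0 < n)%N -> K _ (Bn n) (@nz n))) => HB.
  by left => d L F; apply: DLomega_sub.
right.
pose P m := `[< (0 < m)%N /\ ~ K _ (Bn m) (@nz m) >].
have exP : exists m, P m.
  apply: NNPP => nex; apply: HB => n n0; apply: NNPP => nK; apply: nex; exists n.
  by apply/asboolP.
case: (ex_minnP exP) => m /asboolP [m0 nKm] mmin.
exists m.-1 => d L F; split.
  move=> KF; apply: NNPP => nF; apply: nKm.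
  have := @notDLn_B K fK _ L F m.-1 KF (sKi _ L F KF) nF.
  by rewrite prednK.
move=> DF.
case E : m.-1 DF => [|n] DF.
  case: DF => [emp|full].
  - have [d' [A [F' [KA [c Fc]]]]] : exists d' (A : distrLatticeType d') (F' : A -> Prop),
        K _ A F' /\ exists c, ~ F' c.
      apply: NNPP => nex; apply: ntK => d' A F' KA x; apply: NNPP => Fx; apply: nex.
      by exists d', A, F'; split => //; exists x.
    by apply: (K_ext (@K_empty K fK _ A F' c _ L KA Fc)) => x; split => // /emp.
  - by apply: (K_ext (@K_full K fK _ L)) => x; split => // _; apply: full.
have Kn : K _ (Bn n.+1) (@nz n.+1).
  apply: NNPP => nK; have : P n.+1 by apply/asboolP.
  by move/mmin; rewrite -ltnS -E prednK // ltnn.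
exact: (@DLn_sub K fK n.+1 isT Kn _ L F DF).
Qed.


Section Hom.
Context {d1 d2 : Order.disp_t} {A : distrLatticeType d1} {B : distrLatticeType d2}.
Variable h : A -> B.
Hypothesis hh : lhom h.

Lemma hom_mt b (z : nat -> A) S : h (mt b z S) = mt (h b) (fun k => h (z k)) S.
Proof. by elim: S => [|k S IH] //=; rewrite (proj1 (hh _ _)) IH. Qed.

Lemma hom_om (z : nat -> A) n i : h (om z n i) = om (fun k => h (z k)) n i.
Proof. exact: hom_mt. Qed.

Lemma hom_fm (z : nat -> A) n : h (fm z n) = fm (fun k => h (z k)) n.
Proof. exact: hom_mt. Qed.

Lemma hom_le x y : x <= y -> h x <= h y.
Proof. by move/meet_idPl => e; apply/meet_idPl; rewrite -(proj1 (hh _ _)) e. Qed.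

Lemma nf_pre n (F : B -> Prop) : n_filter n F -> n_filter n (fun x => F (h x)).
Proof.
case: n => [[emp|full]|n].
- by left => x /emp.
- by right => x; apply: full.
move/nfilterE => /(_ isT) [up R]; apply/nfilterE => //; split.
  by move=> x y Fx xy; apply: up Fx (hom_le xy).
move=> z Hz; rewrite hom_fm; apply: R => i iN; rewrite -hom_om; exact: Hz.
Qed.

End Hom.

Lemma DLn_filter_class n : filter_class (DL_n n).
Proof.
split.
- move=> d1 A F d2 B h hh [g hg gh] KF.
  have gg : lhom g.
    move=> x y; split; apply: (can_inj hg).
      by rewrite (proj1 (hh _ _)) !gh.
    by rewrite (proj2 (hh _ _)) !gh.
  apply: (K_ext (nf_pre gg KF)) => b; split.
    by move=> Fgb; exists (g b); rewrite gh.
  by case=> a [<- Fa]; rewrite hg.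
- move=> d1 A F d2 B e he _ KF; exact: nf_pre.
- move=> I dI A F KA dB B p hp _ _.
  case: n KA => [|n] KA.
    case: (classic (exists i, forall x, ~ F i x)) => [[i emp]|nemp].
      by left => b /(_ i) /emp.
    right => b i; case: (KA i) => // emp; exfalso; apply: nemp; exists i; exact: emp.
  apply/nfilterE => //; split.
    move=> x y Fx xy i; have [up _] := (nfilterE (n:=n.+1) _ isT).1 (KA i).
    by apply: up (Fx i) (hom_le (hp i) xy).
  move=> z Hz i; have [_ R] := (nfilterE (n:=n.+1) _ isT).1 (KA i).
  rewrite (hom_fm (hp i)); apply: R => j jn; rewrite -(hom_om (hp i)); exact: Hz.
- move=> d1 A d2 B G h hh _ KG; exact: nf_pre.
Qed.

Lemma U_fin (I : Type) (U : (I -> Prop) -> Prop)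
  (Um : forall X Y : I -> Prop, U X -> (forall i, X i -> Y i) -> U Y)
  (Ui : forall X Y : I -> Prop, U X -> U Y -> U (fun i => X i /\ Y i))
  n (P : nat -> I -> Prop) :
  (forall j, (j <= n)%N -> U (P j)) -> U (fun i => forall j, (j <= n)%N -> P j i).
Proof.
elim: n => [|n IH] H.
  by apply: Um (H 0 isT) _ => i Pi [|j] //.
have U1 := IH (fun j jn => H j (leqW jn)).
apply: Um (Ui _ _ U1 (H n.+1 (leqnn _))) _ => i [H1 H2] j.
rewrite leq_eqVlt => /orP[/eqP -> //|jn]; exact: H1.
Qed.

Lemma DLn_ultra n : ultraprod_closed (DL_n n).
Proof.
move=> I U dI A F [UT UF Um Ui Uu] KA dB B h hh hs hk.
case: n KA => [|n] KA.
- case: (Uu (fun i => forall x, F i x)) => [Uf|Un].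
  + right => b; have [a <-] := hs b; exists a; split => //; apply: Um Uf _ => i; apply.
  + left => b [a [_ Ua]]; apply: UF; apply: Um (Ui _ _ Ua Un) _ => i [Fa nf].
    by case: (KA i) => [emp|full]; [exact: emp _ Fa | exact: nf full].
- apply/nfilterE => //; split.
  + move=> b b' [a [ha Ua]] bb'.
    have [a' ha'] := hs b'.
    exists a'; split => //.
    have e : h (fun i => a i `&` a' i) = h a.
      by rewrite (proj1 (hh a a')) ha ha'; apply/meet_idPl.
    have Ue := (hk _ _).1 e.
    apply: Um (Ui _ _ Ua Ue) _ => i [Fa eq].
    have [up _] := (nfilterE (n:=n.+1) _ isT).1 (KA i).
    by apply: up Fa _; apply/meet_idPl; exact: eq.
  + move=> z Hz.
    pose r k := sval (cid (hs (z k))).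
    have hr : forall k, h (r k) = z k by move=> k; rewrite /r; case: cid.
    have h_mt : forall k0 (S : seq nat),
        h (fun i => mt (r k0 i) (fun k => r k i) S) = mt (z k0) z S.
      move=> k0; elim=> [|k S IH] /=; first exact: hr.
      by rewrite (proj1 (hh (r k) (fun i => mt (r k0 i) (fun k => r k i) S))) IH hr.
    have Uom : forall j, (j <= n.+1)%N -> U (fun i => F i (om (fun k => r k i) n.+1 j)).
      move=> j jn; have [a [ha Ua]] := Hz j jn.
      have ha' : h a = h (fun i => om (fun k => r k i) n.+1 j).
        by rewrite ha; symmetry; exact: h_mt.
      have Ue := (hk _ _).1 ha'.
      by apply: Um (Ui _ _ Ua Ue) _ => i [Fa <-].
    have Uall := U_fin Um Ui Uom.
    exists (fun i => fm (fun k => r k i) n.+1); split.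
      exact: h_mt.
    apply: Um Uall _ => i Hi.
    have [_ R] := (nfilterE (n:=n.+1) _ isT).1 (KA i).
    by apply: R.
Qed.


Lemma subset_leE n (T T' : Bn n) : (T <= T') = (T \subset T').
Proof. by []. Qed.

Lemma DLn_nontriv n : ~ trivial_class (DL_n n).
Proof.
move=> T; apply: (T _ bool (fun _ => False) _ true).
clear T; case: n => [|n]; first by left => x.
apply/nfilterE => //; split => // z Hz; exact: (Hz 0 isT).
Qed.

Lemma DLn_sub_inf n : subclass (DL_n n) DL_inf.
Proof.
move=> d L F; case: n => [[emp|full]|n].
- by move=> x y /emp.
- by move=> x y _ _; apply: full.
by move/nfilterE => /(_ isT) [].
Qed.

Lemma nz_up n : upset (@nz n).
Proof.
move=> T T'; rewrite /nz subset_leE => /set0Pn[i iT] /subsetP sub.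
by apply/set0Pn; exists i; apply: sub.
Qed.

Lemma not_inf_DLn n : ~ subclass DL_inf (DL_n n).
Proof.
move=> S; have := S _ (Bn n.+1) (@nz n.+1) (@nz_up n.+1).
case: n S => [|n] S.
  case=> [emp|full].
  - by apply: (emp setT); rewrite /nz; apply/set0Pn; exists ord0; rewrite inE.
  - by have := full set0; rewrite /nz eqxx.
move/nfilterE => /(_ isT) [_ R].
pose z (j : nat) : Bn n.+2 := [set i : 'I_n.+2 | (i : nat) != j].
have : nz (fm z n.+1).
  apply: R => j jn; rewrite /nz; apply/set0Pn; exists (inord j).
  have : [set (inord j : 'I_n.+2)] <= om z n.+1 j.
    apply/le_om => // k kn kj; rewrite subset_leE sub1set inE inordK //.
    by rewrite eq_sym.
  by rewrite subset_leE sub1set.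
rewrite /nz => /set0Pn[i ifm].
have := fm_le z (ltn_ord i : (val i <= n.+1)%N).
rewrite subset_leE => /subsetP/(_ i ifm).
by rewrite inE eqxx.
Qed.


Section FS.
Context {d : Order.disp_t} {L : distrLatticeType d}.
Variable F : L -> Prop.

Definition FS (S : seq L) (x : L) := exists s, [/\ s \in S, F s & s <= x].

Lemma FS_rule S : Rule (size S).+1 (FS S).
Proof.
set n := (size S).+1.
move=> z Hz.
have ex : forall i, exists s, (i <= n)%N -> [/\ s \in S, F s & s <= om z n i].
  move=> i; case: (leqP i n) => iN.
    by have [s Hs] := Hz i iN; exists s.
  by have [s Hs] := Hz 0 isT; exists s.
pose s i := sval (cid (ex i)).
have sP : forall i, (i <= n)%N -> [/\ s i \in S, F (s i) & s i <= om z n i].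
  by move=> i; rewrite /s; case: cid.
pose sg := [seq index (s i) S | i <- iota 0 n.+1].
have nu : ~~ uniq sg.
  apply/negP => u.
  have sub : {subset sg <= iota 0 (size S)}.
    move=> j /mapP[i]; rewrite mem_iota => /andP[_ iN] ->.
    by rewrite mem_iota add0n index_mem; have [-> _ _] := sP i iN.
  have := uniq_leq_size u sub.
  by rewrite size_map !size_iota /n ltnNge leqW.
have [i [j [ij jS e]]] := uniqPn 0 nu.
have sz : size sg = n.+1 by rewrite size_map size_iota.
rewrite sz in jS.
have iS : (i < n.+1)%N by apply: ltn_trans jS.
rewrite !(nth_map 0) ?size_iota // !nth_iota // !add0n in e.
have [siS Fsi sio] := sP i iS.
have [sjS Fsj sjo] := sP j jS.
have eij : s i = s j by rewrite -(nth_index (s i) siS) e nth_index.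
exists (s i); split => //.
apply/le_fm => k kn.
case: (eqVneq k i) => [ki|ki].
  subst k; rewrite eij; apply: le_trans sjo _; apply: om_le => //.
  by rewrite neq_ltn ij.
by apply: le_trans sio _; apply: om_le.
Qed.

Lemma FS_nfilter S : n_filter (size S).+1 (FS S).
Proof.
apply/nfilterE => //; split; last exact: FS_rule.
by move=> x y [s [sS Fs sx]] xy; exists s; split => //; apply: le_trans xy.
Qed.

End FS.

Lemma exists_ultra (T : eqType) : exists U : (seq T -> Prop) -> Prop,
  ultrafilter U /\ forall x, U (fun S => x \in S).
Proof.
pose Fb (X : seq T -> Prop) := exists S0 : seq T, forall S, {subset S0 <= S} -> X S.
have PF : filter.ProperFilter Fb.
  apply: filter.Build_ProperFilter.
    by case=> S0 /(_ S0) H; apply: H.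
  apply: filter.Build_Filter.
  - by exists [::].
  - move=> X Y [S0 H0] [S1 H1]; exists (S0 ++ S1) => S sub; split.
      by apply: H0 => x xS; apply: sub; rewrite mem_cat xS.
    by apply: H1 => x xS; apply: sub; rewrite mem_cat xS orbT.
  - by move=> X Y XY [S0 H0]; exists S0 => S sub; apply: XY; apply: H0.
have [U [UU FU]] := filter.ultraFilterLemma PF.
have [UP _] := UU; have [Un UF] := UP; have [UT UI US] := UF.
exists U; split.
  split.
  - exact: UT.
  - exact: Un.
  - by move=> X Y UX XY; apply: US UX.
  - by move=> X Y UX UY; apply: UI.
  - by move=> X; apply: filter.in_ultra_setVsetC.
by move=> x; apply: FU; exists [:: x] => S /(_ x); apply; rewrite mem_head.
Qed.


Section Quot.
Variables (I : Type) (U : (I -> Prop) -> Prop).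
Hypothesis UU : ultrafilter U.
Context {d : Order.disp_t} {L : distrLatticeType d}.

Let UT : U (fun _ => True). Proof. by case: UU. Qed.
Let Um : forall X Y : I -> Prop, U X -> (forall i, X i -> Y i) -> U Y. Proof. by case: UU. Qed.
Let Ui : forall X Y : I -> Prop, U X -> U Y -> U (fun i => X i /\ Y i). Proof. by case: UU. Qed.

Definition T0 := I -> L.
Definition Rq (a b : T0) := U (fun i => a i = b i).
Lemma Rrefl a : Rq a a. Proof. by rewrite /Rq; apply: Um UT _. Qed.
Lemma Rsym a b : Rq a b -> Rq b a. Proof. rewrite /Rq => r; apply: (Um r); by move=> i ->. Qed.
Lemma Rtrans a b c : Rq a b -> Rq b c -> Rq a c.
Proof. by rewrite /Rq => r1 r2; apply: Um (Ui r1 r2) _ => i [-> ->]. Qed.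

Definition cls (a : T0) := fun b => Rq a b.
Definition Qt := {C : T0 -> Prop | exists a, C = cls a}.
Definition q (a : T0) : Qt := exist _ (cls a) (ex_intro _ a erefl).

Lemma qsurj (C : Qt) : exists a, C = q a.
Proof. by case: C => C [a e]; exists a; apply: sval_inj. Qed.

Lemma qeq a b : q a = q b <-> Rq a b.
Proof.
split => [e|r].
  have : sval (q b) b by apply: Rrefl.
  by rewrite -e.
apply: sval_inj; apply: funext => c; apply: propext; split => H.
  exact: Rtrans (Rsym r) H.
exact: Rtrans r H.
Qed.

Definition rep (C : Qt) : T0 := sval (cid (svalP C)).
Lemma repK C : q (rep C) = C.
Proof. by rewrite /rep; case: cid => a e; apply: sval_inj => /=; rewrite e. Qed.

Definition qpm (a b : T0) : T0 := fun i => a i `&` b i.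
Definition qpj (a b : T0) : T0 := fun i => a i `|` b i.
Definition qm (C C' : Qt) : Qt := q (qpm (rep C) (rep C')).
Definition qj (C C' : Qt) : Qt := q (qpj (rep C) (rep C')).

Lemma qmE a b : qm (q a) (q b) = q (qpm a b).
Proof.
apply/qeq; have r1 := (qeq _ _).1 (repK (q a)); have r2 := (qeq _ _).1 (repK (q b)).
by rewrite /Rq; apply: (Um (Ui r1 r2)) => i [e1 e2]; rewrite /qpm e1 e2.
Qed.

Lemma qjE a b : qj (q a) (q b) = q (qpj a b).
Proof.
apply/qeq; have r1 := (qeq _ _).1 (repK (q a)); have r2 := (qeq _ _).1 (repK (q b)).
by rewrite /Rq; apply: (Um (Ui r1 r2)) => i [e1 e2]; rewrite /qpj e1 e2.
Qed.

Lemma q_ax : dlax qm qj.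
Proof.
split.
- move=> C C'; have [a ->] := qsurj C; have [b ->] := qsurj C'.
  by rewrite !qmE; congr q; apply: funext => i; apply: meetC.
- move=> C C'; have [a ->] := qsurj C; have [b ->] := qsurj C'.
  by rewrite !qjE; congr q; apply: funext => i; apply: joinC.
- move=> C C' C''; have [a ->] := qsurj C; have [b ->] := qsurj C'; have [c ->] := qsurj C''.
  by rewrite !qmE; congr q; apply: funext => i; apply: meetA.
- move=> C C' C''; have [a ->] := qsurj C; have [b ->] := qsurj C'; have [c ->] := qsurj C''.
  by rewrite !qjE; congr q; apply: funext => i; apply: joinA.
- move=> C C'; have [a ->] := qsurj C; have [b ->] := qsurj C'.
  by rewrite qjE qmE; congr q; apply: funext => i; apply: joinKI.
- move=> C C'; have [a ->] := qsurj C; have [b ->] := qsurj C'.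
  by rewrite qmE qjE; congr q; apply: funext => i; apply: meetKU.
- move=> C C' C''; have [a ->] := qsurj C; have [b ->] := qsurj C'; have [c ->] := qsurj C''.
  by rewrite qjE !qmE qjE; congr q; apply: funext => i; apply: meetUl.
Qed.

Definition UPL := gdl q_ax.
Definition qU (a : T0) : UPL := q a.

End Quot.

Lemma inf_sub (K : fclass) : finitary K ->
  (forall n, (0 < n)%N -> K _ (Bn n) (@nz n)) ->
  forall d (L : distrLatticeType d) (F : L -> Prop), upset F -> K _ L F.
Proof.
move=> [fK uK] HB d L F up.
have [U [UU cone]] := exists_ultra L.
have KS : forall S : seq L, K _ L (FS F S).
  by move=> S; exact: (@DLn_sub K fK (size S).+1 isT (HB (size S).+1 isT) _ L (FS F S) (FS_nfilter F S)).
have [UT UF Um Ui Uu] := UU.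
have KB := uK (seq L) U (fun _ => d) (fun _ => L) (fun S => FS F S) UU KS _ (UPL UU (L:=L))
  (@qU _ _ UU _ L) (fun a a' => conj (esym (qmE UU a a')) (esym (qjE UU a a')))
  (fun b => let: ex_intro a e := qsurj b in ex_intro _ a (esym e)) (qeq UU).
case: fK => _ subK _ _.
pose e (x : L) : UPL UU (L:=L) := qU UU (fun _ => x).
have he : lhom e.
  by move=> x y; split; [exact: (esym (qmE UU _ _)) | exact: (esym (qjE UU _ _))].
have ie : injective e.
  move=> x y /(qeq UU) r; apply: NNPP => xy; apply: UF; apply: Um r _ => S; exact: xy.
apply: (K_ext (subK _ _ _ _ _ e he ie KB)) => x; split.
  case=> a [/(qeq UU) r Ua]; apply: NNPP => Fx; apply: UF.
  apply: Um (Ui _ _ r Ua) _ => S [eS [s [sS Fs sx]]]; apply: Fx.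
  by apply: up Fs _; rewrite -eS.
move=> Fx; exists (fun _ => x); split => //.
by apply: Um (cone x) _ => S xS; exists x; split.
Qed.

Local Close Scope order_scope.


Lemma Bn_omega n : @DL_omega _ (Bn n) (@nz n).
Proof.
split; first exact: nz_up.
exists unit, (fun _ => Order.SetSubsetOrder.subset_display),
  (fun _ => ({set 'I_n} : finDistrLatticeType _)), (fun _ x => x), (fun _ => @nz n).
split; last by move=> x; split => [H []|/(_ tt)].
by move=> _; split; [move=> x y | exact: nz_up].
Qed.

Theorem mainTheorem12 :
  (forall K : fclass,
      filter_class K -> ~ trivial_class K -> subclass K DL_inf ->
      subclass DL_omega K \/ exists n : nat, same_class K (DL_n n)) /\
  (forall K : fclass,
      (finitary K /\ ~ trivial_class K /\ ~ subclass DL_inf K /\ subclass K DL_inf)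
      <-> exists n : nat, same_class K (DL_n n)).
Proof.
split; first exact: part1.
move=> K; split.
  case=> fin [nt [ninf sub]].
  case: (part1 (proj1 fin) nt sub) => // om.
  exfalso; apply: ninf => d L F up.
  apply: (inf_sub fin) => // n n0.
  exact: om _ _ _ (Bn_omega n).
case=> n sc.
have -> : K = DL_n n.
  apply: functional_extensionality_dep => d; apply: functional_extensionality_dep => L.
  by apply: funext => F; apply: propext; apply: sc.
split; first by split; [exact: DLn_filter_class | exact: DLn_ultra].
split; first exact: DLn_nontriv.
split; first exact: not_inf_DLn.
exact: DLn_sub_inf.
Qed.
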